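(* Let $\mathfrak g$ be a finite-dimensional Lie algebra over a field $\mathbb K$ of characteristic zero, and let $\mathfrak h_m=V\oplus\mathbb K e\subset\mathfrak g$ be an ideal isomorphic to the Heisenberg algebra, such that the center of $\mathfrak g$ coincides with the center $\mathbb K e$ of $\mathfrak h_m$. Then there exists a subalgebra $\mathfrak b\subset\mathfrak g$ such that $\mathfrak g=\mathfrak b\oplus V$ (direct sum of vector spaces) and $\mathfrak b\cap\mathfrak h_m=\mathbb K e$. Moreover $V$ is invariant under $\operatorname{ad}_\beta$ for all $\beta\in\mathfrak b$, and each $\operatorname{ad}_\beta|_V$ lies in the symplectic Lie algebra $sp(V,\omega)$.
   Context: The Heisenberg structure: $\dim V=2m$, $e$ central in $\mathfrak h_m$, and $[\xi_1,\xi_2]=\omega(\xi_1,\xi_2)e$ for $\xi_1,\xi_2\in V$, where $\omega$ is a symplectic form on $V$. *)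

(* Defs.v *)
From HB Require Import structures.
From mathcomp Require Import all_boot all_order all_algebra.
Set Implicit Arguments. Unset Strict Implicit. Unset Printing Implicit Defensive.
Import GRing.Theory.
Local Open Scope ring_scope.

Section LieDefs.
Variables (K : fieldType) (L : vectType K).

Definition is_lie_bracket (br : L -> L -> L) : Prop :=
  [/\ (forall (a : K) (x y z : L), br (a *: x + y) z = a *: br x z + br y z),
      (forall (a : K) (x y z : L), br z (a *: x + y) = a *: br z x + br z y),
      (forall x : L, br x x = 0) &
      (forall x y z : L, br x (br y z) + br y (br z x) + br z (br x y) = 0)].

Definition lie_subalgebra (br : L -> L -> L) (B : {vspace L}) : Prop :=
  forall x y, x \in B -> y \in B -> br x y \in B.

Definition lie_ideal (br : L -> L -> L) (I : {vspace L}) : Prop :=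
  forall x y, x \in I -> br y x \in I.

Definition lie_central (br : L -> L -> L) (x : L) : Prop :=
  forall y, br x y = 0.

Definition symplectic_on (V : {vspace L}) (omega : L -> L -> K) : Prop :=
  [/\ (forall (a : K) (x y z : L), x \in V -> y \in V -> z \in V ->
         omega (a *: x + y) z = a * omega x z + omega y z),
      (forall (a : K) (x y z : L), x \in V -> y \in V -> z \in V ->
         omega z (a *: x + y) = a * omega z x + omega z y),
      (forall x, x \in V -> omega x x = 0) &
      (forall x, x \in V -> (forall y, y \in V -> omega x y = 0) -> x = 0)].

Definition heisenberg_ideal (br : L -> L -> L) (m : nat) (V : {vspace L})
    (e : L) (omega : L -> L -> K) (H : {vspace L}) : Prop :=
  [/\ H = (V + <[e]>)%VS, directv (V + <[e]>)%VS, e != 0 &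
      \dim V = (2 * m)%N] /\
  [/\ symplectic_on V omega,
      (forall x, x \in H -> br e x = 0),
      (forall x y, x \in V -> y \in V -> br x y = omega x y *: e) &
      lie_ideal br H].

End LieDefs.

(* Main.v *)
Require Import Defs.
From HB Require Import structures.
From mathcomp Require Import all_boot all_order all_algebra.
Import GRing.Theory.
Local Open Scope ring_scope.

Lemma linfunE' (K : fieldType) (aT rT : vectType K) (f : aT -> rT) :
  (forall (a : K) x y, f (a *: x + y) = a *: f x + f y) -> linfun f =1 f.
Proof.
move=> hf.
have lf : linear f by move=> a x y; exact: hf.
pose F : {linear aT -> rT} := HB.pack f (GRing.isLinear.Build _ _ _ _ f lf).
exact: (lfunE F).
Qed.

Theorem lemma6 (K : fieldType) (L : vectType K) (br : L -> L -> L)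
    (m : nat) (V : {vspace L}) (e : L) (omega : L -> L -> K) (H : {vspace L}) :
  [pchar K] =i pred0 ->
  is_lie_bracket br ->
  heisenberg_ideal br m V e omega H ->
  (forall x : L, lie_central br x <-> x \in <[e]>%VS) ->
  exists B : {vspace L},
    [/\ lie_subalgebra br B,
        (B + V)%VS = fullv,
        directv (B + V)%VS &
        (B :&: H)%VS = <[e]>%VS] /\
    [/\ (forall b x, b \in B -> x \in V -> br b x \in V) &
        (forall b x y, b \in B -> x \in V -> y \in V ->
           omega (br b x) y + omega x (br b y) = 0)].
Proof.
move=> _ [lin1 lin2 alt jac] [[HE dVe e0 _] [[w1 w2 w0 wnd] eH brV Hid]] cent.
have brDl x y z : br (x + y) z = br x z + br y z.
  by have := lin1 1 x y z; rewrite !scale1r.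
have br0l z : br 0 z = 0.
  by apply: (@addrI _ (br 0 z)); rewrite addr0 -brDl addr0.
have brZl a x z : br (a *: x) z = a *: br x z.
  by rewrite -[a *: x]addr0 lin1 br0l addr0.
have brDr x y z : br z (x + y) = br z x + br z y.
  by have := lin2 1 x y z; rewrite !scale1r.
have br0r z : br z 0 = 0.
  by apply: (@addrI _ (br z 0)); rewrite addr0 -brDr addr0.
have brZr a x z : br z (a *: x) = a *: br z x.
  by rewrite -[a *: x]addr0 lin2 br0r addr0.
have brNl x z : br (- x) z = - br x z.
  by rewrite -scaleN1r brZl scaleN1r.
have brNr x z : br z (- x) = - br z x.
  by rewrite -scaleN1r brZr scaleN1r.
have anti x y : br x y = - br y x.
  apply/eqP; rewrite -addr_eq0; have := alt (x + y).
  by rewrite brDl !brDr !alt add0r addr0 => ->.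
have wDl x y z : x \in V -> y \in V -> z \in V -> omega (x + y) z = omega x z + omega y z.
  by move=> xV yV zV; have := w1 1 x y z xV yV zV; rewrite !scale1r mul1r; apply.
have wDr x y z : x \in V -> y \in V -> z \in V -> omega z (x + y) = omega z x + omega z y.
  by move=> xV yV zV; have := w2 1 x y z xV yV zV; rewrite !scale1r mul1r; apply.
have wanti x y : x \in V -> y \in V -> omega x y = - omega y x.
  move=> xV yV; apply/eqP; rewrite -addr_eq0; have := w0 (x + y) (memvD xV yV).
  rewrite wDl ?memvD // !wDr // !w0 // add0r addr0 => ->.
  by [].
have VH : (V <= H)%VS by rewrite HE addvSl.
have eHm : e \in H by rewrite HE (subvP (addvSr V <[e]>)) // memv_line.
have eC y : br e y = 0 by apply: (proj2 (cent e)); exact: memv_line.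
have brE y : br y e = 0 by rewrite anti eC oppr0.
have VcapE : (V :&: <[e]> = 0)%VS by apply/directv_addP.
have eNV : e \notin V.
  apply/negP=> eV; move/negP: e0; apply; rewrite -memv0 -VcapE.
  by rewrite memv_cap eV memv_line.
have kill v : v \in V -> (forall y, y \in V -> br v y \in V) -> v = 0.
  move=> vV hv; apply: wnd => // y yV.
  have := hv y yV; rewrite brV //; case: (eqVneq (omega v y) 0) => // nz hk.
  by move/negP: eNV; case; rewrite -(scalerK nz e) memvZ.
pose pV := projv V.
have inV w : (w - pV w == 0) = (w \in V).
  rewrite subr_eq0; apply/eqP/idP => [->|wV]; first exact: memv_proj.
  by rewrite /pV projv_id.
pose ad x := linfun (br x).
have adE x y : ad x y = br x y by rewrite /ad linfunE' //; exact: lin2.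
pose Psi := linfun (fun x => ((\1 - pV) \o ad x \o pV)%VF).
have PsiE x : Psi x = ((\1 - pV) \o ad x \o pV)%VF.
  rewrite /Psi linfunE' // => a y z; apply/lfunP => u.
  by rewrite add_lfunE scale_lfunE !comp_lfunE !adE lin1 linearP.
pose B := lker Psi.
have memB x : x \in B <-> (forall y, y \in V -> br x y \in V).
  rewrite memv_ker PsiE; split.
    move/eqP/lfunP => h y yV; have := h y.
    rewrite zero_lfunE !comp_lfunE adE /pV projv_id // => h2.
    by move: h2; rewrite -inV add_lfunE opp_lfunE id_lfunE => ->.
  move=> h; apply/eqP/lfunP => u; rewrite zero_lfunE !comp_lfunE adE.
  rewrite add_lfunE opp_lfunE id_lfunE; apply/eqP; rewrite inV; apply: h.
  exact: memv_proj.
have memB1 x : x \in B -> forall y, y \in V -> br x y \in V by move=> /memB.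
have memB2 x : (forall y, y \in V -> br x y \in V) -> x \in B by move=> /memB.
exists B; split; last first.
  split; first by move=> b x bB; exact: (proj1 (memB b) bB).
  move=> b x y bB xV yV.
  have bxV : br b x \in V by exact: (proj1 (memB b) bB).
  have byV : br b y \in V by exact: (proj1 (memB b) bB).
  have := jac b x y.
  rewrite (brV x y) // brZr brE scaler0 add0r.
  rewrite (anti y b) brNr (brV x (br b y)) // (brV y (br b x)) // (wanti y) // => /eqP.
  rewrite -scaleNr -scalerDl scaler_eq0 (negPf e0) orbF -opprD oppr_eq0.
  by rewrite addrC => /eqP.
split.
- move=> x y /memB1 hx /memB1 hy; apply: memB2 => z zV.
  have := jac x y z; rewrite (anti z (br x y)) (anti z x) brNr => /eqP.
  rewrite subr_eq0 => /eqP <-.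
  by apply: memvB; [apply: hx; apply: hy | apply: hy; apply: hx].
- pose Om := linfun (fun v : L => linfun (fun y : L => (omega (pV v) (pV y) : K^o))).
  have OmiE v : linfun (fun y : L => (omega (pV v) (pV y) : K^o)) =1
                 (fun y => omega (pV v) (pV y)).
    by apply: linfunE' => a y z; rewrite linearP w2 ?memv_proj.
  have OmE v : Om v = linfun (fun y : L => (omega (pV v) (pV y) : K^o)).
    apply: linfunE' => a u w; apply/lfunP => y.
    by rewrite add_lfunE scale_lfunE !OmiE linearP w1 ?memv_proj.
  have Om2 v y : Om v y = omega (pV v) (pV y) by rewrite OmE OmiE.
  pose rho := linfun (fun mu : 'Hom(L, K^o) => (mu \o pV)%VF).
  have rhoE mu : rho mu = (mu \o pV)%VF.
    apply: linfunE' => a f g; apply/lfunP => y.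
    by rewrite add_lfunE scale_lfunE !comp_lfunE add_lfunE scale_lfunE.
  pose G := (rho @: fullv)%VS.
  pose ev := linfun (fun mu : 'Hom(L, K^o) =>
                        \row_(i < \dim V) (mu (tnth (vbasis V) i) : K)).
  have evE mu : ev mu = \row_(i < \dim V) (mu (tnth (vbasis V) i) : K).
    apply: linfunE' => a f g; apply/rowP => i.
    by rewrite !mxE add_lfunE scale_lfunE.
  have capG : (G :&: lker ev = 0)%VS.
    apply/eqP; rewrite -subv0; apply/subvP => mu /memv_capP[/memv_imgP[nu _ ->]].
    rewrite memv_ker => /eqP hev; rewrite memv0; apply/eqP.
    have hb i : rho nu (tnth (vbasis V) i) = 0.
      by have := congr1 (fun M : 'rV[K]_(\dim V) => M 0 i) hev; rewrite evE !mxE.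
    have Vk : (V <= lker (rho nu))%VS.
      case/andP: (vbasisP V) => /eqP <- _.
      by apply/span_subvP => b /tnthP [i ->]; rewrite memv_ker hb.
    apply/lfunP => y; rewrite zero_lfunE.
    have : pV y \in lker (rho nu) by apply: (subvP Vk); exact: memv_proj.
    by rewrite memv_ker rhoE !comp_lfunE /pV projv_proj => /eqP.
  have dimG : (\dim G <= \dim V)%N.
    rewrite -(limg_dim_eq capG); apply: leq_trans (dimvS (subvf _)) _.
    by rewrite dimvf dim_matrix mul1r.
  have dimOV : \dim (Om @: V) = \dim V.
    apply: limg_dim_eq; apply/eqP; rewrite -subv0; apply/subvP => v /memv_capP[vV].
    rewrite memv_ker memv0 => /eqP h; apply/eqP; apply: wnd => // y yV.
    have := congr1 (fun f : 'Hom(L, K^o) => f y) h.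
    by rewrite /= Om2 zero_lfunE /pV !projv_id.
  have OVG : (Om @: V <= G)%VS.
    apply/subvP => _ /memv_imgP[v vV ->].
    have -> : Om v = rho (Om v).
      by apply/lfunP => y; rewrite rhoE comp_lfunE !Om2 /pV projv_proj.
    exact: memv_img (memvf _).
  have eqG : (Om @: V)%VS = G by apply/eqP; rewrite eqEdim OVG dimOV dimG.
  have crdE : linfun (coord [tuple e] 0 : L -> K^o) =1 coord [tuple e] 0.
    by apply: linfunE' => a u w; rewrite linearP.
  have ce : coord [tuple e] 0 e = 1.
    by rewrite (coord_free (X:=[tuple e]) 0 0) ?seq1_free.
  apply/vspaceP => x; rewrite memvf; apply/memv_addP.
  pose mu0 := (linfun (coord [tuple e] 0 : L -> K^o) \o daddv_pi <[e]> V \o ad x)%VF.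
  have : rho mu0 \in (Om @: V)%VS by rewrite eqG memv_img ?memvf.
  case/memv_imgP => v vV hv.
  exists (x - v); last by exists v; rewrite // subrK.
  apply: memB2 => y yV.
  set w := br x y.
  have wH : w \in H by apply: Hid; apply: (subvP VH).
  have wsplit : daddv_pi V <[e]> w + daddv_pi <[e]> V w = w.
    by apply: daddv_pi_add => //; rewrite -HE.
  have := memv_pi <[e]> V w; case/vlineP => c hc.
  have hmu : omega v y = c.
    have := congr1 (fun f : 'Hom(L, K^o) => f y) hv.
    rewrite /= rhoE comp_lfunE Om2 /pV !projv_id // /mu0 !comp_lfunE crdE adE.
    by rewrite -/w hc linearZ /= ce => <-; rewrite mulr1.
  rewrite brDl brNl -/w brV // hmu -hc.
  by rewrite -[X in X - _]wsplit addrK memv_pi.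
- apply/directv_addP/eqP; rewrite -subv0; apply/subvP => z /memv_capP[zB zV].
  by rewrite memv0; apply/eqP; apply: kill => //; apply: memB1.
- apply/vspaceP => z; apply/idP/idP.
    case/memv_capP => zB; rewrite HE => /memv_addP[v vV [k /vlineP[c ->] zE]]; subst z.
    have -> : v = 0; last by rewrite add0r memvZ // memv_line.
    apply: kill => // y yV; have := memB1 _ zB y yV.
    by rewrite brDl brZl eC scaler0 addr0.
  case/vlineP => c ->; rewrite memv_cap memvZ //=; last by apply: memB2 => y yV; rewrite eC mem0v.
  by rewrite memvZ.
Qed.
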